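(* Let $X$ be a Fréchet space and $T$ a continuous linear operator on $X$ whose set of periodic points $\mathrm{Per}(T)=\{x\in X:T^nx=x\text{ for some }n\ge1\}$ is dense in $X$. Then $T$ is hyper-recurrent and $\mathrm{Hr}(T)$ is dense in $X$.
   Context: For a continuous linear operator $T$ on a Fréchet space $X$: $x$ is recurrent if $T^{\omega_n}x\to x$ for some strictly increasing sequence $(\omega_n)$ of positive integers; $\mathrm{Rec}(T)$ is the set of recurrent vectors and $T$ is recurrent if $\mathrm{Rec}(T)$ is dense. $\mathfrak{C}$ is the set of strictly increasing sequences $\omega$ with $T^{\omega_n}x\to x$ for some $x\ne0$; $\mathfrak{L}(\omega)=\{x:T^{\omega_n}x\to x\}$. $\mathrm{Hr}(T)$ is the set of $x\in\mathrm{Rec}(T)$ such that $\mathfrak{L}(\omega)$ is dense for every $\omega\in\mathfrak{C}$ with $x\in\mathfrak{L}(\omega)$; a recurrent $T$ is hyper-recurrent if $\mathrm{Hr}(T)\ne\emptyset$. *)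

(* Defs.v *)
From HB Require Import structures.
From mathcomp Require Import all_boot all_order all_algebra.
From mathcomp Require Import all_classical all_reals all_analysis.

Set Implicit Arguments.
Unset Strict Implicit.
Unset Printing Implicit Defensive.

Import Order.TTheory GRing.Theory Num.Theory.
Local Open Scope classical_set_scope.
Local Open Scope ring_scope.

Section Recurrence.
Variables (K : numFieldType) (X : tvsType K).

(** Fréchet space: a locally convex (tvsType) Hausdorff space, metrizable
    (countable neighbourhood base at 0) and complete (every Cauchy sequence,
    in the translation-invariant TVS sense, converges). *)
Definition frechet_space : Prop :=
  [/\ hausdorff_space X,
      (exists B : nat -> set X,
          (forall n, nbhs (0 : X) (B n)) /\
          (forall U, nbhs (0 : X) U -> exists n, B n `<=` U)) &
      (forall u : nat -> X,
          (forall U, nbhs (0 : X) U ->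
             exists N, forall m n, (N <= m)%N -> (N <= n)%N -> U (u m - u n)) ->
          exists l : X, u @ \oo --> l)].

Definition pos_strict_incr (w : nat -> nat) : Prop :=
  (0 < w 0)%N /\ forall n, (w n < w n.+1)%N.

Definition Lset (T : X -> X) (w : nat -> nat) : set X :=
  [set x | (fun n => iter (w n) T x) @ \oo --> x].

Definition Rec (T : X -> X) : set X :=
  [set x | exists w, pos_strict_incr w /\ Lset T w x].

Definition recurrent (T : X -> X) : Prop := dense (Rec T).

Definition frakC (T : X -> X) : set (nat -> nat) :=
  [set w | pos_strict_incr w /\ exists x : X, x <> 0 /\ Lset T w x].

Definition Hr (T : X -> X) : set X :=
  [set x | Rec T x /\ forall w, frakC T w -> Lset T w x -> dense (Lset T w)].

Definition hyper_recurrent (T : X -> X) : Prop :=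
  recurrent T /\ Hr T !=set0.

Definition Per (T : X -> X) : set X :=
  [set x | exists n, (1 <= n)%N /\ iter n T x = x].

End Recurrence.

(* Main.v *)
Require Import Defs.
From HB Require Import structures.
From mathcomp Require Import all_boot all_order all_algebra.
From mathcomp Require Import all_classical all_reals all_analysis.
Import Order.TTheory GRing.Theory Num.Theory.
Local Open Scope classical_set_scope.
Local Open Scope ring_scope.
Set Implicit Arguments. Unset Strict Implicit. Unset Printing Implicit Defensive.

Section S.
Variables (K : numFieldType) (X : tvsType K) (T : {linear X -> X}).

Lemma nbhs_to0 (x : X) (A : set X) : nbhs x A -> nbhs (0:X) (fun v => A (x + v)).
Proof.
move=> Ax; have := @nbhsB K X A x (-x) Ax; rewrite addNr.
apply: filterS => v [a Aa <-]; by rewrite addrA subrr add0r.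
Qed.

Lemma nbhs_from0 (x : X) (N : set X) : nbhs (0:X) N -> nbhs x (fun y => N (y - x)).
Proof.
move=> N0; have := @nbhsT K X N x N0.
apply: filterS => v [a Na <-]; by rewrite (addrC x) addrK.
Qed.

Lemma nbhs_opp (N : set X) : nbhs (0:X) N -> nbhs (0:X) (fun v => N (- v)).
Proof.
move=> N0; have := @nbhs0N K X N N0.
apply: filterS => v [a Na <-]; by rewrite opprK.
Qed.

Lemma nbhs_split (N : set X) : nbhs (0:X) N ->
  exists2 V : set X, nbhs (0:X) V & forall a b, V a -> V b -> N (a + b).
Proof.
move=> N0; have := @add_continuous X (0, 0); rewrite /continuous_at/= addr0.
move=> /(_ N N0)[]/= [W1 W2] []/= W10 W20 Wadd.
exists (W1 `&` W2); first exact: filterI.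
by move=> a b [Wa _] [_ Wb]; apply: (Wadd (a, b)).
Qed.

Lemma cvgX0 (u : nat -> X) (x : X) :
  u @ \oo --> x <-> forall N, nbhs (0:X) N -> \forall n \near \oo, N (u n - x).
Proof.
split.
  move=> ux N N0; exact: (ux _ (@nbhs_from0 x N N0)).
move=> H A Ax; have := H _ (nbhs_to0 Ax); apply: filterS => n /=.
by rewrite addrC subrK.
Qed.
Lemma iterTD n (a b : X) : iter n T (a + b) = iter n T a + iter n T b.
Proof. by elim: n => //= n ->; rewrite linearD. Qed.
Lemma iterTN n (a : X) : iter n T (- a) = - iter n T a.
Proof. by elim: n => //= n ->; rewrite linearN. Qed.
Lemma iterTB n (a b : X) : iter n T (a - b) = iter n T a - iter n T b.
Proof. by rewrite iterTD iterTN. Qed.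
Lemma iterTZ n (c : K) (a : X) : iter n T (c *: a) = c *: iter n T a.
Proof. by elim: n => //= n ->; rewrite linearZ. Qed.
Lemma iterT0 n : iter n T (0 : X) = 0.
Proof. by elim: n => //= n ->; rewrite linear0. Qed.

Lemma iter_cont n : continuous T -> continuous (iter n T).
Proof.
move=> Tc; elim: n => [|n IH] /= x; first exact: cvg_id.
exact: (continuous_comp (IH x) (Tc _)).
Qed.

Lemma iter_perM (p k : nat) (v : X) : iter p T v = v -> iter (k * p) T v = v.
Proof. by move=> h; rewrite iterM; elim: k => //= k ->. Qed.

Lemma iter_mod (p r : nat) (v : X) : iter p T v = v -> iter r T v = iter (r %% p) T v.
Proof. by move=> h; rewrite {1}(divn_eq r p) addnC iterD iter_perM. Qed.

Lemma haus_sep (v : X) : hausdorff_space X -> v <> 0 ->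
  exists2 N, nbhs (0:X) N & ~ N v.
Proof.
move=> hX v0; apply: contra_notP v0 => H; apply/esym/hX => A B A0 Bv.
exists v; split; last exact: nbhs_singleton.
by apply: contra_notP H => nAv; exists A.
Qed.

Lemma gap (y : X) (M : nat) : hausdorff_space X -> (0 < M)%N -> iter M T y = y ->
  exists2 W, nbhs (0:X) W & forall r, W (iter r T y - y) -> iter r T y = y.
Proof.
move=> hX M0 hM.
suff [W W0 HW] : exists2 W, nbhs (0:X) W &
    forall r, (r < M)%N -> W (iter r T y - y) -> iter r T y = y.
  exists W => // r; rewrite (iter_mod r hM); apply: HW; exact: ltn_pmod.
elim: M {M0 hM} => [|L [W W0 HW]]; first by exists setT => //; exact: filterT.
have [e|ne] := pselect (iter L T y = y).
  exists W => // r; rewrite ltnS leq_eqVlt => /orP[/eqP->//|]; exact: HW.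
have [N N0 nN] := haus_sep hX (fun h => ne (subr0_eq h)).
exists (W `&` N); first exact: filterI.
move=> r; rewrite ltnS leq_eqVlt => /orP[/eqP-> [_]//|rL [Wr _]]; exact: HW.
Qed.
Lemma scal_near (v : X) (V : set X) : nbhs (0:X) V -> \forall c \near (0:K^o), V (c *: v).
Proof.
move=> V0; have := @scale_continuous K X (0, v); rewrite /continuous_at /= scale0r.
move=> /(_ V V0) [[A B]] /= [A0 Bv] AB.
apply: filterS A0 => c Ac; apply: (AB (c, v)); split => //; exact: nbhs_singleton.
Qed.

Definition sum8 (a b c d e f g h : X) := ((a+b)+(c+d))+((e+f)+(g+h)).
Definition good8 (V N : set X) := forall a b c d e f g h,
  V a -> V b -> V c -> V d -> V e -> V f -> V g -> V h -> N (sum8 a b c d e f g h).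

Lemma small8 (N : set X) : nbhs (0:X) N ->
  exists V, [/\ nbhs (0:X) V, (forall v, V v -> V (- v)) & good8 V N].
Proof.
move=> N0; have [V1 V10 H1] := nbhs_split N0.
have [V2 V20 H2] := nbhs_split V10.
have [V3 V30 H3] := nbhs_split V20.
exists (V3 `&` (fun v => V3 (- v))); split.
- exact: filterI V30 (nbhs_opp V30).
- by move=> v [a b]; split; rewrite ?opprK.
- move=> a b c d e f g h [? _] [? _] [? _] [? _] [? _] [? _] [? _] [? _].
  by apply: H1; apply: H2; apply: H3.
Qed.
Definition cand (e : K) (j : nat) : K := e / (j.+2)%:R.

Lemma cand_inj (e : K) : 0 < e -> injective (cand e).
Proof.
move=> e0 j k; rewrite /cand => h.
have /mulfI h' : e != 0 by rewrite gt_eqF.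
move: (h' _ _ h) => /invr_inj /eqP; rewrite eqr_nat => /eqP[]//.
Qed.

Lemma cand_lt (e : K) j : 0 < e -> `|cand e j| < e.
Proof.
move=> e0; rewrite /cand normrM normfV gtr0_norm // normr_nat.
rewrite ltr_pdivrMr ?ltr0n // ltr_pMr // ltr1n //.
Qed.

Lemma gen (e : K) (a d : X) : 0 < e -> d <> 0 ->
  \forall j \near \oo, a + cand e j *: d <> 0.
Proof.
move=> e0 d0; have [[j0 h0]|nb] := pselect (exists j0, a + cand e j0 *: d = 0).
  exists j0.+1 => // j /= hj hz.
  have : (cand e j - cand e j0) *: d = 0.
    have : (a + cand e j *: d) - (a + cand e j0 *: d) = 0 by rewrite hz h0 subrr.
    by rewrite opprD addrACA subrr add0r scalerBl.
  move/eqP; rewrite scaler_eq0 subr_eq0 => /orP[/eqP/(cand_inj e0) ej|/eqP//].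
  by move: hj; rewrite ej ltnn.
by exists 0%N => // j _ hz; apply: nb; exists j.
Qed.
Lemma near_all_lt {U : Type} (F : set_system U) (FF : Filter F) (P : nat -> U -> Prop) n :
  (forall r, (r < n)%N -> F (P r)) ->
  F (fun t => forall r, (r < n)%N -> P r t).
Proof.
elim: n => [|n IH] H; first by apply: filterE => t r.
have Hn := @filterI _ _ FF _ _ (IH (fun r rn => H r (ltnW rn))) (H n (ltnSn n)).
apply: filterS Hn => t [h1 h2] r; rewrite ltnS leq_eqVlt => /orP[/eqP->//|rn]; exact: h1.
Qed.

Definition exactp (p : nat) (z : X) := forall r, iter r T z = z <-> (p %| r)%N.

Lemma step (hX : hausdorff_space X) (B : set X) (k : nat) (x : X) (M : nat) (V : set X) :
  (0 < M)%N -> iter M T x = x -> nbhs (0:X) V -> nbhs (0:X) B ->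
  exists x' M' V',
   [/\ (M < M')%N /\ iter M' T x' = x', nbhs (0:X) V' /\ (forall v, V' v -> V' (-v)),
       good8 V' (fun s => [/\ V s, B s & forall r, s = iter r T x - x -> iter r T x = x]),
       (forall j, V' (iter j T (x' - x))) &
       ((exists y, exactp k.+1 y) -> exists z, exactp k.+1 z /\
          forall r, iter r T x' = x' -> iter r T z = z)].
Proof.
move=> M0 hM V0 B0.
have [W W0 HW] := gap hX M0 hM.
have [V' [V'0 V'sym V'8]] := small8 (filterI V0 (filterI B0 W0)).
have [z [hz1 hz2]] : exists z, iter k.+1 T z = z /\
    ((exists y, exactp k.+1 y) -> exactp k.+1 z).
  have [[y ey]|ny] := pselect (exists y, exactp k.+1 y).
    by exists y; split => //; exact: (ey k.+1).2 (dvdnn _).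
  by exists 0; split => //; rewrite iterT0.
set p := k.+1.
have [e e0 He] : exists2 e : K, 0 < e &
    forall c, `|c| < e -> forall r, (r < p)%N -> V' (c *: iter r T z).
  have : \forall c \near (0:K^o), forall r, (r < p)%N -> V' (c *: iter r T z).
    by apply: near_all_lt => r _; exact: scal_near.
  by move=> /nbhs_norm0P [e e0 He]; exists e => // c ce; exact: He.
have Mp0 : (0 < M * p)%N by rewrite muln_gt0 M0.
have hMp : iter (M * p) T z = z by exact: iter_perM.
have hMpx : iter (M * p) T x = x by rewrite mulnC; exact: iter_perM.
have : \forall j \near \oo, forall r, (r < M * p)%N -> iter r T z <> z ->
    (iter r T x - x) + cand e j *: (iter r T z - z) <> 0.
  apply: near_all_lt => r _.
  have [ez|nez] := pselect (iter r T z = z); first by apply: filterE.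
  apply: filterS (gen (iter r T x - x) e0 (fun h => nez (subr0_eq h))) => j h _; exact: h.
move=> [N _ HN]; have {HN}Hj := HN N (leqnn N).
set c := cand e N in Hj.
exists (x + c *: z), (M * (p * 2))%N, V'; split => //.
- split; last first.
    have e1 : iter (M * (p * 2)) T x = x by rewrite mulnC; exact: iter_perM.
    have e2 : iter (M * (p * 2)) T z = z by rewrite (mulnC p 2) mulnA; exact: iter_perM.
    by rewrite iterTD iterTZ e1 e2.
  by rewrite ltn_Pmulr // muln_gt0.
- move=> a b c' d e' f g h Va Vb Vc Vd Ve Vf Vg Vh.
  have [Va' [Vb' Wv]] := V'8 _ _ _ _ _ _ _ _ Va Vb Vc Vd Ve Vf Vg Vh.
  by split => // r hr; apply: HW; rewrite -hr.
- move=> j; rewrite (addrC x) addrK iterTZ (iter_mod j hz1).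
  apply: He; [exact: cand_lt | exact: ltn_pmod].
- move=> /hz2 ez; exists z; split => // r hr.
  have [//|nz] := pselect (iter r T z = z); exfalso.
  have hMpx' : iter (M * p) T (x + c *: z) = x + c *: z by rewrite iterTD iterTZ hMp hMpx.
  apply: (Hj (r %% (M * p))%N (ltn_pmod _ Mp0)); first by rewrite -(iter_mod r hMp).
  move: hr; rewrite (iter_mod r hMpx') iterTD iterTZ => h.
  by rewrite scalerBr addrACA -opprD h subrr.
Qed.
Lemma combo (u v x y : X) : (u - x) - (u - v) + (x - y) = v - y.
Proof. by rewrite opprB (addrC (u - x)) -addrA !subrKA. Qed.
Lemma combo2 (u v x y : X) : v - y = 0 -> u - x = (u - v) - (x - y).
Proof. by move=> h; apply/eqP; rewrite -subr_eq0 opprD opprK addrA combo h. Qed.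

Section G8.
Variables (V N : set X) (g : good8 V N) (V0 : V 0) (Vs : forall v, V v -> V (- v)).
Lemma g8_comb q a1 b1 c1 a2 b2 c2 : V q -> V a1 -> V b1 -> V c1 -> V a2 -> V b2 -> V c2 ->
  N (q - (a1 + (b1 + c1)) + (a2 + (b2 + c2))).
Proof.
move=> *; have := @g q (- a1) (- b1) (- c1) a2 b2 c2 0; rewrite /sum8 addr0 !addrA.
by rewrite !opprD !addrA; apply; auto.
Qed.
Lemma g8_diff a1 b1 c1 a2 b2 c2 : V a1 -> V b1 -> V c1 -> V a2 -> V b2 -> V c2 ->
  N ((a1 + (b1 + c1)) - (a2 + (b2 + c2))).
Proof.
move=> *; have := @g a1 b1 c1 (- a2) (- b2) (- c2) 0 0; rewrite /sum8 !addr0 !addrA.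
by rewrite !opprD !addrA; apply; auto.
Qed.
Lemma g8_add a b : V a -> V b -> N (a + b).
Proof. by move=> *; have := @g a b 0 0 0 0 0 0; rewrite /sum8 !addr0; apply. Qed.
Lemma g8_sub a b : V a -> V b -> N (a - b).
Proof. by move=> *; apply: g8_add; auto. Qed.
Lemma g8_3 a b c : V a -> V b -> V c -> N (a + (b + c)).
Proof. by move=> *; have := @g a b c 0 0 0 0 0; rewrite /sum8 !addr0 !addrA; apply. Qed.
End G8.
End S.

Section Constr.
Variables (K : numFieldType) (X : tvsType K) (T : {linear X -> X}).
Variables (hX : hausdorff_space X) (B : nat -> set X) (B0 : forall n, nbhs (0:X) (B n)).

Record st := St {sx : X; sM : nat; sV : set X}.
Definition Inv (s : st) := [/\ (0 < sM s)%N, iter (sM s) T (sx s) = sx s & nbhs (0:X) (sV s)].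
Definition Rel (k : nat) (s s' : st) :=
   [/\ (sM s < sM s')%N /\ iter (sM s') T (sx s') = sx s',
       nbhs (0:X) (sV s') /\ (forall v, sV s' v -> sV s' (-v)),
       good8 (sV s') (fun q => [/\ sV s q, B k q &
          forall r, q = iter r T (sx s) - sx s -> iter r T (sx s) = sx s]),
       (forall j, sV s' (iter j T (sx s' - sx s))) &
       ((exists y, exactp T k.+1 y) -> exists z, exactp T k.+1 z /\
          forall r, iter r T (sx s') = sx s' -> iter r T z = z)].

Lemma step_ex k (s : {s : st | Inv s}) : exists s' : {s : st | Inv s}, Rel k (sval s) (sval s').
Proof.
case: s => -[x M V] [/= h1 h2 h3].
have [x' [M' [V' [[lt it] [nb sym] g e ex]]]] := step hX k h1 h2 h3 (B0 k).
have inv : Inv (St x' M' V') by split => //=; exact: leq_ltn_trans lt.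
by exists (exist _ (St x' M' V') inv).
Qed.

Variable s0 : {s : st | Inv s}.

Definition nxt k s := sval (cid (step_ex k s)).
Fixpoint sq (n : nat) : {s : st | Inv s} := if n is m.+1 then nxt m (sq m) else s0.
Definition xs n := sx (sval (sq n)).
Definition Ms n := sM (sval (sq n)).
Definition Vs n := sV (sval (sq n)).

Lemma sq_rel n : Rel n (sval (sq n)) (sval (sq n.+1)).
Proof. exact: (svalP (cid (step_ex n (sq n)))). Qed.
Lemma sq_inv n : Inv (sval (sq n)).
Proof. exact: svalP (sq n). Qed.

Lemma Vs_nb n : nbhs (0:X) (Vs n).
Proof. by case: (sq_inv n). Qed.
Lemma Vs0 n : Vs n 0.
Proof. exact: nbhs_singleton (Vs_nb n). Qed.
Lemma Vs_sym n v : Vs n.+1 v -> Vs n.+1 (- v).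
Proof. by case: (sq_rel n) => _ [_ h] _ _ _; exact: h. Qed.
Lemma Vs_g8 n : good8 (Vs n.+1) (fun q => [/\ Vs n q, B n q &
          forall r, q = iter r T (xs n) - xs n -> iter r T (xs n) = xs n]).
Proof. by case: (sq_rel n). Qed.
Lemma Vs_add n a b : Vs n.+1 a -> Vs n.+1 b -> Vs n (a + b).
Proof. by move=> ha hb; case: (g8_add (Vs_g8 (n:=n)) (Vs0 _) ha hb). Qed.
Lemma Vs_mono n a : Vs n.+1 a -> Vs n a.
Proof. by move=> ha; rewrite -[a]addr0; apply: Vs_add => //; exact: Vs0. Qed.
Lemma Vs_monoN m n a : (m <= n)%N -> Vs n a -> Vs m a.
Proof.
elim: n => [|n IH]; first by rewrite leqn0 => /eqP->.
rewrite leq_eqVlt => /orP[/eqP->//|]; rewrite ltnS => mn h; apply: IH => //.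
exact: Vs_mono.
Qed.
Lemma Ms_inv n : iter (Ms n) T (xs n) = xs n.
Proof. by case: (sq_inv n). Qed.
Lemma Ms_gt0 n : (0 < Ms n)%N.
Proof. by case: (sq_inv n). Qed.
Lemma Ms_lt n : (Ms n < Ms n.+1)%N.
Proof. by case: (sq_rel n) => -[]. Qed.
Lemma xs_inc n j : Vs n.+1 (iter j T (xs n.+1 - xs n)).
Proof. by case: (sq_rel n) => _ _ _ h _; exact: h. Qed.

Lemma tail d k j : Vs k (iter j T (xs (k + d) - xs k)).
Proof.
elim: d k => [|d IH] k; first by rewrite addn0 subrr iterT0; exact: Vs0.
rewrite -addSnnS -(subrKA (xs k.+1)) iterTD; apply: Vs_add; first exact: IH.
exact: xs_inc.
Qed.

Lemma tail2 k m j : (k <= m)%N -> exists a b, [/\ Vs k.+1 a, Vs k.+1 b &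
  iter j T (xs m - xs k) = a + b].
Proof.
rewrite leq_eqVlt => /orP[/eqP<-|km].
  by exists 0, 0; rewrite subrr iterT0 addr0; split => //; exact: Vs0.
exists (iter j T (xs m - xs k.+1)), (iter j T (xs k.+1 - xs k)); split.
- by rewrite -(subnKC km); exact: tail.
- exact: xs_inc.
- by rewrite -iterTD subrKA.
Qed.

Variable Bbase : forall U, nbhs (0:X) U -> exists n, B n `<=` U.
Variable compl : forall u : nat -> X,
   (forall U, nbhs (0 : X) U ->
      exists N, forall m n, (N <= m)%N -> (N <= n)%N -> U (u m - u n)) ->
   exists l : X, u @ \oo --> l.
Variable Tc : continuous T.

Lemma xs_cauchy U : nbhs (0 : X) U ->
  exists N, forall m n, (N <= m)%N -> (N <= n)%N -> U (xs m - xs n).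
Proof.
move=> U0; have [i Bi] := Bbase U0; exists i.+1 => m n hm hn.
have e : xs m - xs n = (xs m - xs i.+1) - (xs n - xs i.+1) by rewrite opprB subrKA.
apply: Bi; rewrite e.
have hm' := tail (m - i.+1) i.+1 0; rewrite subnKC // in hm'.
have hn' := tail (n - i.+1) i.+1 0; rewrite subnKC // in hn'.
by case: (g8_sub (Vs_g8 (n:=i)) (Vs0 _) (@Vs_sym i) hm' hn').
Qed.

Definition xl := projT1 (cid (compl xs_cauchy)).
Lemma xl_cvg : xs @ \oo --> xl.
Proof. exact: projT2 (cid (compl xs_cauchy)). Qed.

Lemma tailx k j : exists a b c, [/\ Vs k.+1 a, Vs k.+1 b, Vs k.+1 c &
   iter j T (xl - xs k) = a + (b + c)].
Proof.
have c1 : (fun m => iter j T (xs m)) @ \oo --> iter j T xl.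
  by apply: continuous_cvg; [exact: iter_cont | exact: xl_cvg].
have := (cvgX0 _ _).1 c1 _ (nbhs_opp (Vs_nb k.+1)).
move=> h; have [m [hm km]] : exists m, Vs k.+1 (- (iter j T (xs m) - iter j T xl)) /\ (k <= m)%N.
  have hk : \forall m \near \oo, (k <= m)%N by exists k.
  have [N _ HN] := filterI h hk.
  by exists (maxn N k); apply: HN; rewrite /= leq_maxl.
have [a [b [ha hb e]]] := tail2 j km.
exists (- (iter j T (xs m) - iter j T xl)), a, b; split => //.
by rewrite -e opprB -iterTB -iterTD subrKA.
Qed.

Lemma P1 k (w : nat -> nat) : (fun n => iter (w n) T xl) @ \oo --> xl ->
  \forall n \near \oo, iter (w n) T (xs k) = xs k.
Proof.
move=> H; have := (cvgX0 _ _).1 H _ (Vs_nb k.+1); apply: filterS => n hq.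
have [a1 [b1 [c1 [h1 h2 h3 e1]]]] := tailx k (w n).
have [a2 [b2 [c2 [h4 h5 h6 e2]]]] := tailx k 0.
have := g8_comb (Vs_g8 (n:=k)) (Vs0 _) (@Vs_sym k) hq h1 h2 h3 h4 h5 h6.
rewrite -e1 -e2 /= iterTB combo => -[_ _ G]; exact: G.
Qed.

Lemma P2 : (fun n => iter (Ms n) T xl) @ \oo --> xl.
Proof.
apply/cvgX0 => U U0; have [i Bi] := Bbase U0; exists i.+1 => // k /= hk.
have [a1 [b1 [c1 [h1 h2 h3 e1]]]] := tailx k (Ms k).
have [a2 [b2 [c2 [h4 h5 h6 e2]]]] := tailx k 0.
have e : iter (Ms k) T xl - xl = iter (Ms k) T (xl - xs k) - (xl - xs k).
  by rewrite iterTB; apply: combo2; rewrite Ms_inv subrr.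
have mo : forall a, Vs k.+1 a -> Vs i.+1 a by move=> a; apply: Vs_monoN; rewrite ltnS ltnW.
rewrite /= in e2; apply: Bi; rewrite e e1 e2.
by case: (g8_diff (Vs_g8 (n:=i)) (Vs0 _) (@Vs_sym i) (mo _ h1) (mo _ h2) (mo _ h3)
  (mo _ h4) (mo _ h5) (mo _ h6)).
Qed.

Lemma P3 : Vs 0 (xl - xs 0).
Proof.
have [a [b [c [h1 h2 h3 e]]]] := tailx 0 0; rewrite /= in e; rewrite e.
by case: (g8_3 (Vs_g8 (n:=0)) (Vs0 _) h1 h2 h3).
Qed.

Lemma P4 k : (exists y, exactp T k.+1 y) -> exists z, exactp T k.+1 z /\
          forall r, iter r T (xs k.+1) = xs k.+1 -> iter r T z = z.
Proof. by case: (sq_rel k). Qed.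
End Constr.

Section Final.
Variables (K : numFieldType) (X : tvsType K) (T : {linear X -> X}).

Lemma min_exact (y : X) n : (0 < n)%N -> iter n T y = y -> exists k, exactp T k.+1 y.
Proof.
move=> n0 hn.
have ex : exists m, `[< (0 < m)%N /\ iter m T y = y >] by exists n; apply/asboolP.
case: (ex_minnP ex) => p /asboolP [p0 hp] pmin.
exists p.-1; rewrite prednK // => r; split; last first.
  by move=> /dvdnP [k ->]; exact: iter_perM.
rewrite (iter_mod r hp) => h; rewrite /dvdn; apply/eqP.
case: (posnP (r %% p)) => // rp; exfalso.
have : (p <= r %% p)%N by apply: pmin; apply/asboolP.
by rewrite leqNgt ltn_pmod.
Qed.

Lemma dense_mono (A C : set X) : dense A -> A `<=` C -> dense C.
Proof.
move=> dA hAC O O0 oO; have [x [Ox Ax]] := dA O O0 oO; exists x; split => //; exact: hAC.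
Qed.
End Final.

Unset Implicit Arguments.
Set Strict Implicit.

Theorem theorem5p13 (K : numFieldType) (X : tvsType K) (T : {linear X -> X}) :
  frechet_space X -> continuous T -> dense (Per T) ->
  hyper_recurrent T /\ dense (Hr T).
Proof.
move=> [hX [Bf [B0 Bbase]] compl] Tc dP.
have dH : dense (Hr T).
  move=> O O0 oO.
  have [x0 [Ox0 [M0 [M0p hM0]]]] := dP O O0 oO.
  have nO : nbhs x0 O by apply: open_nbhs_nbhs; split.
  pose V0 := fun v => O (x0 + v).
  have inv : Inv T (St x0 M0 V0) by split => //; exact: nbhs_to0.
  pose s0 := exist _ (St x0 M0 V0) inv : {s | Inv T s}.
  exists (xl hX B0 s0 Bbase compl); split.
    have := P3 hX B0 s0 Bbase compl Tc; rewrite /Vs /= /V0.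
    by rewrite /xs /= subrKC.
  split.
    exists (Ms hX B0 s0); split; last exact: P2.
    split; [exact: Ms_gt0 | exact: Ms_lt].
  move=> w _ Lw; apply: dense_mono dP _ => y [n [n1 hn]].
  have [k ek] := min_exact n1 hn.
  have [z [ez st]] := P4 hX B0 s0 (ex_intro _ y ek).
  apply: cvg_near_cst; have := P1 Tc k.+1 Lw.
  by apply: filterS => m hm; apply/(ek _); apply/(ez _); apply: st.
split => //; split; first exact: dense_mono dH (fun x hx => hx.1).
have [x [_ hx]] := dH setT (ex_intro _ 0 I) openT.
by exists x.
Qed.
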